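(* Let $\mathbb{C}$ be a locally small category and $\mathbb{C}_{\mathit{fin}}$ a full subcategory satisfying (C1)–(C5) below. Let $\mathbb{A}$ be a full subcategory of $\mathbb{C}_{\mathit{fin}}$ and let $F\in\mathrm{Ob}(\mathbb{C})$ be universal and locally finite for $\mathbb{A}$. Then for all integers $t\ge2$ and all $A\in\mathrm{Ob}(\mathbb{A})$ the following are equivalent: (1) $t_{\mathbb{A}}(A)\le t$; (2) $F\to(B)^A_{<\omega,t}$ for all $B\in\mathrm{Ob}(\mathbb{A})$ with $A\to B$; (3) for all $B\in\mathrm{Ob}(\mathbb{A})$ with $A\to B$ there is a coloring $\lambda:\hom(A,B)\to\{0,\dots,t-1\}$ which is essential at $B$.
   Context: Write $A\to B$ if $\hom(A,B)\ne\varnothing$. Conditions: (C1) all morphisms of $\mathbb{C}$ are monomorphisms; (C2) $\mathrm{Ob}(\mathbb{C}_{\mathit{fin}})$ is a set; (C3) $\hom(A,B)$ is finite for $A,B\in\mathrm{Ob}(\mathbb{C}_{\mathit{fin}})$; (C4) for every $F\in\mathrm{Ob}(\mathbb{C})$ there is $A\in\mathrm{Ob}(\mathbb{C}_{\mathit{fin}})$ with $A\to F$; (C5) for every $B\in\mathrm{Ob}(\mathbb{C}_{\mathit{fin}})$ the set $\{A\in\mathrm{Ob}(\mathbb{C}_{\mathit{fin}}):A\to B\}$ is finite. $F$ is universal for $\mathbb{A}$ if $A\to F$ for all $A\in\mathrm{Ob}(\mathbb{A})$. $F$ is locally finite for $\mathbb{A}$ if for all $A,B\in\mathrm{Ob}(\mathbb{A})$,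 $e\in\hom(A,F)$, $f\in\hom(B,F)$ there exist $D\in\mathrm{Ob}(\mathbb{A})$, $r\in\hom(D,F)$, $p\in\hom(A,D)$, $q\in\hom(B,D)$ with $r\cdot p=e$, $r\cdot q=f$, such that for every $H\in\mathrm{Ob}(\mathbb{C})$, $r'\in\hom(H,F)$, $p'\in\hom(A,H)$, $q'\in\hom(B,H)$ with $r'\cdot p'=e$, $r'\cdot q'=f$ there is $s\in\hom(D,H)$ with $r'\cdot s=r$, $s\cdot p=p'$, $s\cdot q=q'$. For objects $A,B,C$ and integers $k\ge2$, $t\ge1$: $C\to(B)^A_{k,t}$ means that for every $\chi:\hom(A,C)\to\{0,\dots,k-1\}$ there is $w\in\hom(B,C)$ with $|\chi(w\cdot\hom(A,B))|\le t$; $C\to(B)^A_{<\omega,t}$ means $C\to(B)^A_{k,t}$ for all $k\ge2$. $t_{\mathbb{A}}(A)$ is the least positive $n$ such that for all $k\ge2$ and all $B\in\mathrm{Ob}(\mathbb{A})$ there is $C\in\mathrm{Ob}(\mathbb{A})$ with $C\to(B)^A_{k,n}$, and $\infty$ otherwise. For $\chi:\hom(A,F)\to\{0,\dots,k-1\}$ and $w\in\hom(B,F)$, $\chi^{(w)}:\hom(A,B)\to\{0,\dots,k-1\}$ is $\chi^{(w)}(f)=\chi(w\cdot f)$. The kernel of a function $g$ is $\ker g=\{(x,y):g(x)=g(y)\}$. A coloring $\lambda:\hom(A,B)\to\{0,\dots,t-1\}$ is essential at $B$ (with respect to $F$) if for every $k\ge2$ and every $\chi:\hom(A,F)\to\{0,\dots,k-1\}$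 there is $w\in\hom(B,F)$ with $\ker\lambda\subseteq\ker\chi^{(w)}$. *)

(* Defs.v *)
From mathcomp Require Import all_boot.
From mathcomp Require Import boolp.
From Stdlib Require List.
Set Implicit Arguments. Unset Strict Implicit. Unset Printing Implicit Defensive.

(* A (locally small) category: hom-sets are types, equality of morphisms is
   Leibniz equality. *)
Record category := Category {
  Ob :> Type;
  hom : Ob -> Ob -> Type;
  comp : forall (A B D : Ob), hom B D -> hom A B -> hom A D;
  idm : forall A : Ob, hom A A;
  compA : forall (A B D E : Ob) (h : hom D E) (g : hom B D) (f : hom A B),
      comp h (comp g f) = comp (comp h g) f;
  comp1m : forall (A B : Ob) (f : hom A B), comp (idm B) f = f;
  compm1 : forall (A B : Ob) (f : hom A B), comp f (idm A) = f
}.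
Arguments hom {c}.
Arguments comp {c A B D}.
Arguments idm {c}.

Section Defs.
Variable C : category.

Definition arrow (A B : C) : Prop := inhabited (hom A B).

Definition mono (A B : C) (f : hom A B) : Prop :=
  forall (X : C) (g h : hom X A), comp f g = comp f h -> g = h.

Definition finite_type (T : Type) : Prop := exists s : list T, forall x, List.In x s.

(* Full subcategories are given by predicates on objects (Cfin, Aob). *)
Definition C1 : Prop := forall (A B : C) (f : hom A B), mono f.
Definition C3 (Cfin : C -> Prop) : Prop :=
  forall A B : C, Cfin A -> Cfin B -> finite_type (hom A B).
Definition C4 (Cfin : C -> Prop) : Prop :=
  forall F : C, exists A : C, Cfin A /\ arrow A F.
Definition C5 (Cfin : C -> Prop) : Prop :=
  forall B : C, Cfin B ->
    exists s : list C, forall A : C, Cfin A -> arrow A B -> List.In A s.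

Definition universal (Aob : C -> Prop) (F : C) : Prop :=
  forall A : C, Aob A -> arrow A F.

Definition locally_finite (Aob : C -> Prop) (F : C) : Prop :=
  forall (A B : C), Aob A -> Aob B ->
  forall (e : hom A F) (f : hom B F),
  exists (D : C) (r : hom D F) (p : hom A D) (q : hom B D),
    [/\ Aob D, comp r p = e, comp r q = f &
     forall (H : C) (r' : hom H F) (p' : hom A H) (q' : hom B H),
       comp r' p' = e -> comp r' q' = f ->
       exists s : hom D H, [/\ comp r' s = r, comp s p = p' & comp s q = q']].

Definition col_image (A B D : C) (k : nat) (chi : hom A D -> 'I_k) (w : hom B D)
  : {set 'I_k} :=
  finset (fun c : 'I_k => `[< exists f : hom A B, chi (comp w f) = c >]).

Definition erdos_rado (D B A : C) (k t : nat) : Prop :=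
  forall chi : hom A D -> 'I_k, exists w : hom B D, #|col_image chi w| <= t.

Definition erdos_rado_fin (D B A : C) (t : nat) : Prop :=
  forall k, 2 <= k -> erdos_rado D B A k t.

Definition tA_ok (Aob : C -> Prop) (A : C) (n : nat) : Prop :=
  forall k, 2 <= k -> forall B : C, Aob B ->
    exists D : C, Aob D /\ erdos_rado D B A k n.

Definition tA_pred (Aob : C -> Prop) (A : C) : pred nat :=
  fun n => `[< 0 < n /\ tA_ok Aob A n >].

Lemma tA_ex (Aob : C -> Prop) (A : C) :
  (exists n, 0 < n /\ tA_ok Aob A n) -> exists n, tA_pred Aob A n.
Proof. by move=> [n Hn]; exists n; apply/asboolP. Qed.

(* t_A(A) : None stands for infinity *)
Definition tA (Aob : C -> Prop) (A : C) : option nat :=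
  match pselect (exists n, 0 < n /\ tA_ok Aob A n) with
  | left H => Some (ex_minn (tA_ex H))
  | right _ => None
  end.

Definition ole (x : option nat) (t : nat) : bool :=
  if x is Some n then n <= t else false.

Definition ker (X Y : Type) (g : X -> Y) : X -> X -> Prop := fun x y => g x = g y.

Definition restr_col (A B F : C) (k : nat) (chi : hom A F -> 'I_k) (w : hom B F)
  : hom A B -> 'I_k := fun f => chi (comp w f).

Definition essential (F A B : C) (t : nat) (lam : hom A B -> 'I_t) : Prop :=
  forall k, 2 <= k -> forall chi : hom A F -> 'I_k,
    exists w : hom B F, forall f g, ker lam f g -> ker (restr_col chi w) f g.

End Defs.

(* Main.v *)
Require Import Defs.
From mathcomp Require Import all_boot.
From mathcomp Require Import boolp.
From mathcomp Require Import finmap.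
From mathcomp Require Import classical_sets cardinality filter topology.
From Stdlib Require List.
Import Defs.
Set Implicit Arguments. Unset Strict Implicit. Unset Printing Implicit Defensive.

Module CompactAux.
Import ArrowAsProduct.
Local Open Scope classical_set_scope.

Lemma mem_In (T : eqType) (x : T) (s : seq T) : x \in s -> List.In x s.
Proof.
elim: s => //= a s IH; rewrite inE => /orP [/eqP ->|/IH]; by [left|right].
Qed.

Lemma compactness (I J : Type) (k : nat) (c : J -> (I -> 'I_k) -> Prop)
  (S : J -> seq I) :
  (forall j (x y : I -> 'I_k), (forall i, List.In i (S j) -> x i = y i) ->
     c j x -> c j y) ->
  (forall js : seq J, exists x, forall j, List.In j js -> c j x) ->
  exists x, forall j, c j x.
Proof.
move=> Hloc Hfin.
pose T : {classic I} -> topologicalType := fun _ => discrete_topology 'I_k.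
pose X := prod_topology T.
have cpt : compact [set: X].
  have := @tychonoff {classic I} T (fun _ => setT) (fun s => @finite_compact (T s) setT (@finite_finset (ordinal k) setT)).
  move=> H; suff <- : [set f : X | forall i, [set: T i] (f i)] = setT by [].
  by rewrite predeqE.
have nb : forall (p : X) (s : seq I), nbhs p [set y : X | forall i, List.In i s -> y i = p i].
  move=> p; elim=> [|a s IH].
    by apply: filterS filterT => y _ i [].
  have H1 : nbhs p [set y : X | y a = p a].
    have := @proj_continuous {classic I} T a p.
    move=> /(_ [set p a]) H; apply: H; exact: (@discrete_set1 (T a)).
  apply: filterS (filterI H1 IH) => y [ya ys] i /= [<-|/ys] //.
pose f := fun j : {classic J} => [set x : X | c j x].
have Hfi : finI [set: {classic J}] f.
  move=> D' _; have [x Hx] := Hfin (enum_fset D').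
  exists x => j /= jD; apply: Hx.
  exact: (@mem_In {classic J} j (enum_fset D') jD).
have FF := finI_filter Hfi.
have [p [_ Hp]] := cpt _ FF filterT.
exists p => j.
have Fj : filter_from (finI_from [set: {classic J}] f) id (f j).
  by exists (f j) => //; apply: finI_from1.
have [y [cy ay]] := Hp _ _ Fj (nb p (S j)).
by apply: Hloc cy => i /ay.
Qed.

End CompactAux.

Lemma col_imageP (C : category) (A B D : C) (k : nat) (chi : hom A D -> 'I_k)
  (w : hom B D) (c : 'I_k) :
  c \in col_image chi w <-> exists f : hom A B, chi (comp w f) = c.
Proof. by rewrite /col_image inE; split => [/asboolP|H]; [|apply/asboolP]. Qed.

Lemma In_nth_ex (T : Type) (d x : T) (s : seq T) :
  List.In x s -> exists i, i < size s /\ nth d s i = x.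
Proof.
elim: s => //= a s IH [->|/IH [i [Hi Hx]]]; first by exists 0.
by exists i.+1.
Qed.

Lemma In_map (T U : Type) (f : T -> U) (x : T) (s : seq T) :
  List.In x s -> List.In (f x) (map f s).
Proof. by elim: s => //= a s IH [->|/IH]; [left|right]. Qed.

Theorem lemma3p4 (C : category) (Cfin Aob : C -> Prop)
  (HC1 : C1 C) (HC3 : C3 Cfin) (HC4 : C4 Cfin) (HC5 : C5 Cfin)
  (HAfin : forall X : C, Aob X -> Cfin X)
  (F : C) (Huniv : universal Aob F) (Hlf : locally_finite Aob F)
  (t : nat) (ht : 2 <= t) (A : C) (HA : Aob A) :
  [<-> ole (tA Aob A) t;
       forall B : C, Aob B -> arrow A B -> erdos_rado_fin F B A t;
       forall B : C, Aob B -> arrow A B ->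
         exists lam : hom A B -> 'I_t, essential F lam].
Proof.
tfae.
-
  rewrite /tA; case: pselect => // H.
  case: ex_minnP => n /asboolP [n0 Hok] _ /= nt B HB _ k hk chi.
  have [D [HD er]] := Hok k hk B HB.
  have [u] := Huniv D HD.
  have [w Hw] := er (fun f => chi (comp u f)).
  exists (comp u w); apply: leq_trans nt; apply: leq_trans Hw.
  apply: subset_leq_card; apply/fintype.subsetP => c /col_imageP [f <-].
  by apply/col_imageP; exists f; rewrite compA.
- move=> h1 B HB [d].
  have [s Hs] := HC3 _ _ (HAfin _ HA) (HAfin _ HB).
  have /choice [idx Hidx] : forall f : hom A B, exists i : 'I_(size s), nth d s i = f.
    by move=> f; have [i [Hi Hf]] := In_nth_ex d (Hs f); exists (Ordinal Hi).
  pose G := {ffun 'I_(size s) -> 'I_t}.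
  pose lamg (g : G) (f : hom A B) := g (idx f).
  apply: contrapT => Hno.
  have Hbad : forall g : G, exists p : {kk : nat & hom A F -> 'I_kk},
      2 <= projT1 p /\ forall w : hom B F,
        ~ (forall f f', ker (lamg g) f f' -> ker (restr_col (projT2 p) w) f f').
    move=> g; apply: contrapT => Hg; apply: Hno; exists (lamg g) => kk hkk chi.
    apply: contrapT => Hw; apply: Hg; exists (existT _ kk chi); split => // w Hw'.
    by apply: Hw; exists w.
  have /choice [P HP] := Hbad.
  pose T := {dffun forall g : G, 'I_(projT1 (P g))}.
  pose code (x : hom A F) : T := [ffun g => projT2 (P g) x].
  pose chi (x : hom A F) : 'I_(#|T|.+2) :=
    widen_ord (leq_trans (leqnSn _) (leqnSn _)) (enum_rank (code x)).
  have [w Hw] := h1 B HB (inhabits d) (#|T|.+2) isT chi.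
  pose S := col_image chi w.
  have x0S : chi (comp w d) \in S by apply/col_imageP; exists d.
  pose lam0 (f : hom A B) : 'I_t := widen_ord Hw (enum_rank_in x0S (chi (comp w f))).
  have lam0E : forall f f', lam0 f = lam0 f' -> chi (comp w f) = chi (comp w f').
    move=> f f' /(congr1 val) /= /val_inj /(congr1 enum_val).
    rewrite !enum_rankK_in //; apply/col_imageP; by [exists f' | exists f].
  pose g0 : G := [ffun i : 'I_(size s) => lam0 (nth d s i)].
  have [_ Hg0] := HP g0; apply: (Hg0 w) => f f'.
  rewrite /ker /lamg /restr_col /g0 !ffunE !Hidx => /lam0E.
  move=> /(congr1 val) /= /val_inj /(congr1 enum_val); rewrite !enum_rankK.
  move=> E; have := congr1 (fun h : T => h g0) E; by rewrite !ffunE.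
- move=> h2.
  suff Hok : tA_ok Aob A t.
    rewrite /tA; case: pselect => [H|H]; last first.
      by exfalso; apply: H; exists t; split => //; exact: ltnW ht.
    case: ex_minnP => m _ Hmin /=; apply: Hmin; apply/asboolP; split => //.
    exact: ltnW ht.
  move=> k hk B HB.
  have k0 : 0 < k by exact: ltnW hk.
  have Fer : forall chi : hom A F -> 'I_k, exists w : hom B F, #|col_image chi w| <= t.
    move=> chi; case: (pselect (arrow A B)) => [arr|narr].
    + have [lam Hlam] := h2 B HB arr.
      have [w Hw] := Hlam k hk chi; exists w.
      have /choice [psi Hpsi] : forall c : 'I_k, exists i : 'I_t,
          c \in col_image chi w -> exists f, chi (comp w f) = c /\ lam f = i.
        move=> c; case: (boolP (c \in col_image chi w)) => [/col_imageP [f Hf]|_].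
          by exists (lam f) => _; exists f.
        by exists (Ordinal (ltnW ht)).
      rewrite -(card_in_imset (f:=psi)); first by apply: leq_trans (max_card _) _; rewrite card_ord.
      move=> c c' Hc Hc' E.
      have [f [Hf Hl]] := Hpsi c Hc; have [f' [Hf' Hl']] := Hpsi c' Hc'.
      by rewrite -Hf -Hf'; apply: (Hw f f'); rewrite /ker Hl Hl' E.
    + have [w] := Huniv B HB; exists w.
      suff -> : col_image chi w = finset.set0 by rewrite cards0.
      apply/finset.setP => c; rewrite finset.in_set0; apply/negbTE/negP => /col_imageP [f _].
      exact: narr (inhabits f).
  apply: contrapT => Hno.
  have Hbad : forall D, Aob D -> exists chiD : hom A D -> 'I_k,
      forall p : hom B D, t < #|col_image chiD p|.
    move=> D HD; apply: contrapT => H; apply: Hno; exists D; split => // chiD.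
    apply: contrapT => H'; apply: H; exists chiD => p; rewrite ltnNge; apply/negP => Hp.
    by apply: H'; exists p.
  have [sB HsB] := HC3 _ _ (HAfin _ HA) (HAfin _ HB).
  have amal : forall js : seq (hom B F), exists D (r : hom D F),
      Aob D /\ forall w, List.In w js -> exists p : hom B D, comp r p = w.
    elim => [|w js [D [r [HD IH]]]].
      by have [u] := Huniv A HA; exists A, u; split.
    have [D' [r' [p [q [HD' Hrp Hrq _]]]]] := Hlf D B HD HB r w.
    exists D', r'; split => // w' /= [<-|/IH [pw Hpw]]; first by exists q.
    by exists (comp p pw); rewrite compA Hrp.
  have [chi Hchi] : exists chi : hom A F -> 'I_k, forall w : hom B F,
      t < #|col_image chi w|; last first.
    by have [w Hw] := Fer chi; move: (Hchi w); rewrite ltnNge Hw.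
  apply: (@CompactAux.compactness (hom A F) (hom B F) k
    (fun (w : hom B F) (chi : hom A F -> 'I_k) => t < #|col_image chi w|)
    (fun w => map (comp w) sB)).
  + move=> w x y Hxy /=; suff -> : col_image x w = col_image y w by [].
    apply/finset.setP => c; apply/idP/idP => /col_imageP [f <-]; apply/col_imageP;
      exists f; rewrite Hxy //; exact: In_map.
  + move=> js; have [D [r [HD Hp]]] := amal js; have [chiD HchiD] := Hbad D HD.
    have /choice [chi Hchi] : forall x : hom A F, exists c : 'I_k,
        forall g : hom A D, comp r g = x -> c = chiD g.
      move=> x; case: (pselect (exists g, comp r g = x)) => [[g0 Hg0]|Hn].
        exists (chiD g0) => g Hg; congr chiD; apply: (HC1 _ _ r); by rewrite Hg0 Hg.
      by exists (Ordinal k0) => g Hg; exfalso; apply: Hn; exists g.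
    exists chi => w /Hp [p <-] /=.
    suff -> : col_image chi (comp r p) = col_image chiD p by apply: HchiD.
    apply/finset.setP => c; apply/idP/idP => /col_imageP [f <-]; apply/col_imageP;
      exists f; rewrite -compA.
      by apply/esym/Hchi.
    by apply: Hchi.
Qed.
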